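(* Let $E$ be a bi-Hilbertian bimodule over a unital $C^*$-algebra $A$. If a state $\phi:A\to\mathbb{C}$ is $E$-invariant, then it is a trace.
   Context: A bi-Hilbertian $A$-bimodule is an $A$-bimodule $E$ which is a full right Hilbert $A$-module with inner product $(\cdot|\cdot)_A$ and a full left Hilbert $A$-module with inner product ${}_A(\cdot|\cdot)$, such that the left action is adjointable for $(\cdot|\cdot)_A$ and the right action is adjointable for ${}_A(\cdot|\cdot)$. A state $\phi$ on $A$ is $E$-invariant if $\phi((e_1|e_2)_A)=\phi({}_A(e_2|e_1))$ for all $e_1,e_2\in E$. *)

(* Defs.v *)
From HB Require Import structures.
From mathcomp Require Import all_boot all_order all_algebra.
From mathcomp Require Import reals complex.
Set Implicit Arguments. Unset Strict Implicit. Unset Printing Implicit Defensive.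
Import Order.TTheory GRing.Theory Num.Theory.
Local Open Scope ring_scope.
Local Open Scope complex_scope.

Section Defs.
Variable R : realType.
Local Notation C := R[i].

Definition cmod (c : C) : R := Num.sqrt (complex.Re c ^+ 2 + complex.Im c ^+ 2).

Definition cauchy_complete (V : zmodType) (nrm : V -> R) : Prop :=
  forall u : nat -> V,
    (forall eps : R, 0 < eps -> exists N : nat, forall m n : nat,
        (N <= m)%N -> (N <= n)%N -> nrm (u m - u n) < eps) ->
    exists l : V, forall eps : R, 0 < eps -> exists N : nat, forall n : nat,
        (N <= n)%N -> nrm (u n - l) < eps.

Record unital_Cstar_algebra (A : algType C) (star : A -> A) (nA : A -> R) : Prop := {
  star_add   : forall a b : A, star (a + b) = star a + star b;
  star_scale : forall (c : C) (a : A), star (c *: a) = c^* *: star a;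
  star_mul   : forall a b : A, star (a * b) = star b * star a;
  star_invol : forall a : A, star (star a) = a;
  nA_eq0     : forall a : A, nA a = 0 -> a = 0;
  nA_scale   : forall (c : C) (a : A), nA (c *: a) = cmod c * nA a;
  nA_triangle : forall a b : A, nA (a + b) <= nA a + nA b;
  nA_submult : forall a b : A, nA (a * b) <= nA a * nA b;
  nA_Cstar   : forall a : A, nA (star a * a) = nA a ^+ 2;
  nA_complete : cauchy_complete nA
}.

Definition Cstar_positive (A : algType C) (star : A -> A) (a : A) : Prop :=
  exists b : A, a = star b * b.

(** Fullness: the closed linear span of the values of the inner product is A. *)
Definition full_ip (A : algType C) (nA : A -> R) (E : Type) (ip : E -> E -> A) : Prop :=
  forall (a : A) (eps : R), 0 < eps ->
    exists s : seq (C * (E * E)),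
      nA (a - \sum_(t <- s) (t.1 *: ip t.2.1 t.2.2)) < eps.

Record full_right_Hilbert_module (A : algType C) (star : A -> A) (nA : A -> R)
    (E : lmodType C) (ract : E -> A -> E) (ip : E -> E -> A) : Prop := {
  ract_addl  : forall (e f : E) (a : A), ract (e + f) a = ract e a + ract f a;
  ract_addr  : forall (e : E) (a b : A), ract e (a + b) = ract e a + ract e b;
  ract_scalel : forall (c : C) (e : E) (a : A), ract (c *: e) a = c *: ract e a;
  ract_scaler : forall (c : C) (e : E) (a : A), ract e (c *: a) = c *: ract e a;
  ract_mul   : forall (e : E) (a b : A), ract (ract e a) b = ract e (a * b);
  rip_addr   : forall e f g : E, ip e (f + g) = ip e f + ip e g;
  rip_scaler : forall (c : C) (e f : E), ip e (c *: f) = c *: ip e f;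
  rip_ract   : forall (e f : E) (a : A), ip e (ract f a) = ip e f * a;
  rip_star   : forall e f : E, star (ip e f) = ip f e;
  rip_pos    : forall e : E, Cstar_positive star (ip e e);
  rip_def    : forall e : E, ip e e = 0 -> e = 0;
  rip_complete : cauchy_complete (fun e : E => Num.sqrt (nA (ip e e)));
  rip_full   : full_ip nA ip
}.

Record full_left_Hilbert_module (A : algType C) (star : A -> A) (nA : A -> R)
    (E : lmodType C) (lact : A -> E -> E) (lip : E -> E -> A) : Prop := {
  lact_addl  : forall (a b : A) (e : E), lact (a + b) e = lact a e + lact b e;
  lact_addr  : forall (a : A) (e f : E), lact a (e + f) = lact a e + lact a f;
  lact_scalel : forall (c : C) (a : A) (e : E), lact (c *: a) e = c *: lact a e;
  lact_scaler : forall (c : C) (a : A) (e : E), lact a (c *: e) = c *: lact a e;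
  lact_mul   : forall (a b : A) (e : E), lact a (lact b e) = lact (a * b) e;
  lip_addl   : forall e f g : E, lip (e + f) g = lip e g + lip f g;
  lip_scalel : forall (c : C) (e f : E), lip (c *: e) f = c *: lip e f;
  lip_lact   : forall (a : A) (e f : E), lip (lact a e) f = a * lip e f;
  lip_star   : forall e f : E, star (lip e f) = lip f e;
  lip_pos    : forall e : E, Cstar_positive star (lip e e);
  lip_def    : forall e : E, lip e e = 0 -> e = 0;
  lip_complete : cauchy_complete (fun e : E => Num.sqrt (nA (lip e e)));
  lip_full   : full_ip nA lip
}.

Record bi_Hilbertian_bimodule (A : algType C) (star : A -> A) (nA : A -> R)
    (E : lmodType C) (lact : A -> E -> E) (ract : E -> A -> E)
    (rip : E -> E -> A) (lip : E -> E -> A) : Prop := {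
  bi_assoc : forall (a b : A) (e : E), ract (lact a e) b = lact a (ract e b);
  bi_right : full_right_Hilbert_module star nA ract rip;
  bi_left  : full_left_Hilbert_module star nA lact lip;
  bi_ladj  : forall (a : A) (e f : E), rip (lact a e) f = rip e (lact (star a) f);
  bi_radj  : forall (a : A) (e f : E), lip (ract e a) f = lip e (ract f (star a))
}.

(** A state: a positive linear functional of norm one. *)
Definition is_state (A : algType C) (star : A -> A) (nA : A -> R) (phi : A -> C) : Prop :=
  [/\ (forall (c : C) (a b : A), phi (c *: a + b) = c * phi a + phi b),
      (forall b : A, (0 : C) <= phi (star b * b)),
      (forall a : A, cmod (phi a) <= nA a) &
      (forall k : R, k < 1 -> exists a : A, nA a <= 1 /\ k < cmod (phi a))].

Definition E_invariant (A : algType C) (E : Type) (rip lip : E -> E -> A) (phi : A -> C) : Prop :=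
  forall e1 e2 : E, phi (rip e1 e2) = phi (lip e2 e1).

Definition is_trace (A : algType C) (phi : A -> C) : Prop :=
  forall a b : A, phi (a * b) = phi (b * a).

End Defs.

(* Main.v *)
Require Import Defs.
From HB Require Import structures.
From mathcomp Require Import all_boot all_order all_algebra.
From mathcomp Require Import reals complex.
From mathcomp Require Import ring lra.
Import Order.TTheory GRing.Theory Num.Theory.
Local Open Scope ring_scope.

Lemma cmod_ge0 (R : realType) (z : R[i]) : 0 <= cmod z.
Proof. by rewrite /cmod sqrtr_ge0. Qed.

Lemma cmod_eq0 (R : realType) (z : R[i]) : cmod z = 0 -> z = 0.
Proof.
case: z => x y; rewrite /cmod /= => /eqP; rewrite sqrtr_eq0 => H.
have hx : 0 <= x ^+ 2 by rewrite sqr_ge0.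
have hy : 0 <= y ^+ 2 by rewrite sqr_ge0.
have ex : x ^+ 2 = 0 by apply/eqP; rewrite eq_le hx andbT; lra.
have ey : y ^+ 2 = 0 by apply/eqP; rewrite eq_le hy andbT; lra.
move/eqP: ex; rewrite sqrf_eq0 => /eqP ->.
by move/eqP: ey; rewrite sqrf_eq0 => /eqP ->.
Qed.

Lemma cmodN1 (R : realType) : cmod (-1 : R[i]) = 1.
Proof. by rewrite /cmod /= oppr0 expr0n /= addr0 sqrrN expr1n sqrtr1. Qed.

Theorem mainTheorem15 (R : realType) (A : algType R[i]) (star : A -> A) (nA : A -> R)
    (E : lmodType R[i]) (lact : A -> E -> E) (ract : E -> A -> E)
    (rip lip : E -> E -> A) (phi : A -> R[i]) :
  unital_Cstar_algebra star nA ->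
  bi_Hilbertian_bimodule star nA lact ract rip lip ->
  is_state star nA phi ->
  E_invariant rip lip phi ->
  is_trace phi.
Proof.
move=> HA HB [lin _ bnd _] inv.
have HR := bi_right HB.
have phi0 : phi 0 = 0.
  have := lin 1 0 0; rewrite scaler0 addr0 mul1r => h.
  by apply: (addrI (phi 0)); rewrite addr0 -h.
have phiD : forall x y, phi (x + y) = phi x + phi y.
  by move=> x y; have := lin 1 x y; rewrite scale1r mul1r.
have phiZ : forall c x, phi (c *: x) = c * phi x.
  by move=> c x; have := lin c x 0; rewrite addr0 phi0 addr0.
have phiN : forall x, phi (- x) = - phi x.
  by move=> x; rewrite -scaleN1r phiZ mulN1r.
have nA0 : nA 0 = 0.
  by rewrite -(scale0r (0 : A)) (nA_scale HA) /cmod /= expr0n /= addr0 sqrtr0 mul0r.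
have nAN : forall x, nA (- x) = nA x.
  by move=> x; rewrite -scaleN1r (nA_scale HA) cmodN1 mul1r.
have nA_ge0 : forall x, 0 <= nA x.
  move=> x; have := nA_triangle HA x (- x); rewrite subrr nA0 nAN => h; lra.
have key : forall e1 e2 a, phi (rip e1 e2 * a) = phi (a * rip e1 e2).
  move=> e1 e2 a.
  rewrite -(rip_ract HR) inv (bi_radj HB) -inv.
  rewrite -(rip_star HR) (rip_ract HR) (star_mul HA) (star_invol HA).
  by rewrite (rip_star HR).
move=> b a.
have Qsum : forall s : seq (R[i] * (E * E)),
    phi ((\sum_(t <- s) (t.1 *: rip t.2.1 t.2.2)) * a)
    = phi (a * \sum_(t <- s) (t.1 *: rip t.2.1 t.2.2)).
  elim=> [|t s IH]; first by rewrite big_nil mul0r mulr0.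
  rewrite big_cons mulrDl mulrDr !phiD IH -scalerAl -scalerAr !phiZ key //.
apply/eqP; rewrite -subr_eq0; apply/eqP.
set z := _ - _.
have zE : z = phi (b * a - a * b) by rewrite phiD phiN.
apply: cmod_eq0.
apply/eqP; rewrite eq_le cmod_ge0 andbT; apply/negP => /negP; rewrite -ltNge => dpos.
set d := cmod z in dpos.
have kpos : 0 < 2 * nA a + 1 by have := nA_ge0 a; lra.
have [s Hs] := rip_full HR b (divr_gt0 dpos kpos).
set S := \sum_(t <- s) _ in Hs.
have zE2 : z = phi ((b - S) * a - a * (b - S)).
  rewrite zE !phiD !phiN mulrBl mulrBr !phiD !phiN Qsum; ring.
have h1 : d <= nA ((b - S) * a - a * (b - S)) by rewrite /d zE2 bnd.
have h2 := nA_triangle HA ((b - S) * a) (- (a * (b - S))).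
rewrite nAN in h2.
have h3 := nA_submult HA (b - S) a.
have h4 := nA_submult HA a (b - S).
have h5 : nA (b - S) * (2 * nA a + 1) < d.
  by rewrite -ltr_pdivlMr.
have := nA_ge0 (b - S); have := nA_ge0 a => g1 g2.
have : nA (b - S) * nA a + nA a * nA (b - S) <= nA (b - S) * (2 * nA a + 1).
  rewrite (mulrC (nA a)) -mulr2n mulrDr mulr1 -mulr_natl mulrCA.
  rewrite mulr2n mulr1; lra.
lra.
Qed.
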